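(* For every integer $n\ge 1$, letting $\mu=\mu(n)$ be the exponent of the highest power of $2$ dividing $n$, $$t^{\mu}\bigl(B_{n+1}(t)+B_{n-1}(t)\bigr)=\bigl(B_{2^{\mu}+1}(t)+B_{2^{\mu}-1}(t)\bigr)B_{n}(t).$$ In particular, if $n$ is odd then $B_{n+1}(t)+B_{n-1}(t)=tB_n(t)$.
   Context: The Stern polynomials $B_n(t)\in\mathbb{Z}[t]$, $n\ge 0$, are defined by $B_0(t)=0$, $B_1(t)=1$, $B_{2n}(t)=tB_n(t)$ and $B_{2n+1}(t)=B_n(t)+B_{n+1}(t)$ for $n\ge 1$. *)

(* Defs.v *)
From mathcomp Require Import all_boot all_order all_algebra.
Set Implicit Arguments. Unset Strict Implicit. Unset Printing Implicit Defensive.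
Import GRing.Theory.
Local Open Scope ring_scope.

(* Fuel-based evaluation of the recursion
   B_0 = 0, B_1 = 1, B_{2m} = t B_m, B_{2m+1} = B_m + B_{m+1}. *)
Fixpoint stern_fuel (fuel n : nat) : {poly int} :=
  match fuel with
  | O => 0
  | S f =>
    match n with
    | O => 0
    | S O => 1
    | _ => if odd n then stern_fuel f n./2 + stern_fuel f (n./2).+1
           else 'X * stern_fuel f n./2
    end
  end.

Definition stern (n : nat) : {poly int} := stern_fuel n.+1 n.

Lemma stern_half_lt (n : nat) : (((n.+3)./2).+1 < n.+3)%N.
Proof.
rewrite /= !ltnS uphalf_half.
have := odd_double_half n; rewrite -addnn.
by case: (odd n) => /= E; rewrite -{2}E ?leq_add2l ?add0n leq_addr.
Qed.

Lemma stern_fuel_enough (f n : nat) : (n < f)%N -> stern_fuel f n = stern n.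
Proof.
suff H : forall a b m, (m < a)%N -> (m < b)%N -> stern_fuel a m = stern_fuel b m.
  by move=> Hn; rewrite /stern; apply: H.
clear; elim=> [|f' IH] [|g] n //= Hf Hg.
rewrite ltnS in Hf; rewrite ltnS in Hg.
case: n Hf Hg => [|[|[|n]]] Hf Hg //.
  by rewrite /= (IH g 1).
have h3 := stern_half_lt n.
have h2 : ((n.+3)./2 < n.+3)%N by apply: ltnW.
rewrite !(IH _ _ (leq_trans h2 Hf) (leq_trans h2 Hg))
        !(IH _ _ (leq_trans h3 Hf) (leq_trans h3 Hg)) //.
Qed.

Lemma stern0 : stern 0 = 0. Proof. by []. Qed.
Lemma stern1 : stern 1 = 1. Proof. by []. Qed.

Lemma stern_fuelS (f n : nat) : (2 <= n)%N ->
  stern_fuel f.+1 n = if odd n then stern_fuel f n./2 + stern_fuel f (n./2).+1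
                      else 'X * stern_fuel f n./2.
Proof. by case: n => [|[|n]]. Qed.

Lemma stern_even (n : nat) : (1 <= n)%N -> stern n.*2 = 'X * stern n.
Proof.
move=> Hn; rewrite {1}/stern stern_fuelS; last by rewrite -addnn (leq_add Hn Hn).
rewrite odd_double doubleK; congr (_ * _); apply: stern_fuel_enough.
by rewrite -addnn -{1}[n]addn0 ltn_add2l.
Qed.

Lemma half_double_S (n : nat) : (n.*2.+1)./2 = n.
Proof. by rewrite -[n.*2.+1]/(true + n.*2)%N half_bit_double. Qed.

Lemma odd_double_S (n : nat) : odd n.*2.+1.
Proof. by rewrite /= odd_double. Qed.

Lemma stern_odd (n : nat) : (1 <= n)%N ->
  stern n.*2.+1 = stern n + stern n.+1.
Proof.
move=> Hn; rewrite {1}/stern stern_fuelS; last by rewrite ltnS -addnn (leq_trans Hn (leq_addr _ _)).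
rewrite odd_double_S half_double_S; congr (_ + _); apply: stern_fuel_enough.
  by rewrite ltnS -addnn leq_addr.
by rewrite !ltnS -addnn -{1}[n]addn0 ltn_add2l.
Qed.

(* Main.v *)
Require Import Defs.
From mathcomp Require Import all_boot all_order all_algebra.
Import GRing.Theory.
Local Open Scope ring_scope.

Lemma sE (n : nat) : stern n.*2 = 'X * stern n.
Proof. case: n => [|n]; first by rewrite mulr0. exact: stern_even. Qed.

Lemma sO (n : nat) : stern n.*2.+1 = stern n + stern n.+1.
Proof. case: n => [|n]; first by rewrite stern0 add0r. exact: stern_odd. Qed.

Lemma sP (j : nat) : stern (2 ^ j) = 'X ^+ j.
Proof.
elim: j => [|j IH]; first by rewrite expr0.
by rewrite expnS mul2n sE IH exprS.
Qed.

Lemma sD (k : nat) : (1 <= k)%N ->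
  stern (k.*2).+1 + stern (k.*2).-1 = stern k.+1 + stern k.-1 + stern k *+ 2.
Proof.
case: k => [//|k] _.
rewrite sO doubleS /= sO mulr2n.
move: (stern k) (stern k.+1) (stern k.+2) => a b c.
by rewrite addrACA [c + a]addrC [b + a]addrC addrACA.
Qed.

Lemma cS (j : nat) :
  stern (2 ^ j.+1).+1 + stern (2 ^ j.+1).-1
  = stern (2 ^ j).+1 + stern (2 ^ j).-1 + 'X ^+ j *+ 2.
Proof. by rewrite expnS mul2n sD ?expn_gt0 // sP. Qed.

Lemma main_aux (n : nat) : (1 <= n)%N ->
  'X ^+ logn 2 n * (stern n.+1 + stern n.-1)
  = (stern (2 ^ logn 2 n).+1 + stern (2 ^ logn 2 n).-1) * stern n.
Proof.
elim: n {-2}n (leqnn n) => [|N IH] n Hn H1; first by case: n Hn H1.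
case Ho: (odd n).
- have L : logn 2 n = 0%N.
    apply/eqP; rewrite -leqn0 leqNgt logn_gt0 mem_primes /=.
    by rewrite dvdn2 Ho !andbF.
  rewrite L expr0 mul1r /= (@stern_even 1%N) // stern1 mulr1.
  have E : n = (n./2).*2.+1 by rewrite -{1}[n]odd_double_half Ho add1n.
  by rewrite E /= -doubleS sE sO stern0 addr0 sE mulrDr addrC.
- have E := odd_double_half n; rewrite Ho /= add0n in E.
  set k := n./2 in E.
  have Hk : (1 <= k)%N by move: H1; rewrite -E; case: (k).
  have Hkn : (k <= N)%N.
    have : (k < n)%N by rewrite -E -addnn -{1}[k]add0n ltn_add2r.
    move=> h; by rewrite -ltnS (leq_trans h Hn).
  have L : logn 2 n = (logn 2 k).+1.
    by rewrite -E -mul2n lognM // (_ : logn 2 2 = 1%N).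
  have IHk := IH k Hkn Hk.
  rewrite L -E sD // cS sE exprS -mulrA mulrDr IHk.
  move: (stern k) (_ + stern (2 ^ logn 2 k).-1) (GRing.exp _ (logn 2 k)) => b c x.
  set X := 'X.
  by rewrite mulrDr mulrDl mulrCA !mulrnAr mulrnAl [X * (x * b)]mulrCA.
Qed.

Theorem mainTheorem3 (n : nat) : (1 <= n)%N ->
  let mu := logn 2 n in
  'X ^+ mu * (stern n.+1 + stern n.-1)
  = (stern (2 ^ mu).+1 + stern (2 ^ mu).-1) * stern n.
Proof. exact: main_aux. Qed.
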